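(* Let $r\ge 2$ be an even integer. For every nonnegative integer $n$, the number of overpartitions of $n$ in which every non-overlined part is odd and greater than $r$ (overlined parts being unrestricted apart from being distinct) equals the number of partitions of $n$ into odd parts in which parts greater than $r$ may come in two colors (parts at most $r$ have a single color).
   Context: A partition of $n$ is a finite non-increasing sequence of positive integers (parts) summing to $n$ (the empty partition is the unique partition of $0$). In partitions with two colors, two partitions are the same if they have the same multiset of (part, color) pairs; e.g. for $r=2$, $n=6$ the relevant partitions are $5_11,5_21,3_13_1,3_13_2,3_23_2,3_11^3,3_21^3,1^6$. An overpartition of $n$ is a partition of $n$ in which the first occurrence of each part size may be overlined; equivalently, a pair $(\lambda,\mu)$ with $\lambda$ a partition into distinct parts (the overlined parts), $\mu$ an arbitrary partition (the non-overlined parts), and $|\lambda|+|\mu|=n$. *)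

(* Defs.v *)
(* Partitions of n are encoded by multiplicity functions:
   index i : 'I_n stands for the part size i.+1 (all parts of a partition of n
   are in 1..n, and every multiplicity is at most n, so 'I_n.+1 suffices). *)
From mathcomp Require Import all_boot.


(* An overpartition of n as a pair (lambda, mu): lambda = set of overlined
   (distinct) part sizes, mu = multiplicities of the non-overlined parts. *)
Definition overptn_odd_gt (r n : nat) (x : {set 'I_n} * {ffun 'I_n -> 'I_n.+1}) : bool :=
  [&& (\sum_(i in x.1) i.+1 + \sum_(i < n) i.+1 * x.2 i == n)
    & [forall i : 'I_n, (0 < x.2 i) ==> (odd i.+1 && (r < i.+1))]].

Definition num_overptn_odd_gt (r n : nat) : nat :=
  #|[pred x : ({set 'I_n} * {ffun 'I_n -> 'I_n.+1})%type | overptn_odd_gt r n x]|.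

(* A two-colored partition of n as a multiset of (part, color) pairs, given by
   its multiplicity function on 'I_n * bool (color false = 1, true = 2). *)
Definition colptn_odd (r n : nat) (m : {ffun 'I_n * bool -> 'I_n.+1}) : bool :=
  [&& (\sum_(p : 'I_n * bool) p.1.+1 * m p == n)
    & [forall p : 'I_n * bool,
        (0 < m p) ==> (odd p.1.+1 && (p.2 ==> (r < p.1.+1)))]].

Definition num_colptn_odd (r n : nat) : nat :=
  #|[pred m : {ffun 'I_n * bool -> 'I_n.+1} | colptn_odd r n m]|.

(* Main.v *)
Require Import Defs.
From mathcomp Require Import all_boot zify.

Definition op p := p %/ 2 ^ logn 2 p.

Lemma op_spec p : op p * 2 ^ logn 2 p = p.
Proof. by rewrite /op divnK // pfactor_dvdnn. Qed.

Lemma op_odd p : 0 < p -> odd (op p).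
Proof.
move=> p0; case ev: (odd (op p)) => //.
have : 2 ^ (logn 2 p).+1 %| p.
  by rewrite -{2}(op_spec p) expnS dvdn_pmul2r ?expn_gt0 // dvdn2 ev.
by rewrite pfactor_dvdn // ltnn.
Qed.

Lemma op_le p : op p <= p.
Proof. exact: leq_div. Qed.

Lemma logn_oddM o k : odd o -> logn 2 (o * 2 ^ k) = k.
Proof.
move=> oo; have o0 : 0 < o by case: o oo.
rewrite lognM ?expn_gt0 // pfactorK // logn_coprime //.
by rewrite coprime2n oo.
Qed.

Lemma op_oddM o k : odd o -> op (o * 2 ^ k) = o.
Proof. by move=> oo; rewrite /op logn_oddM // mulnK // expn_gt0. Qed.

Lemma bits_eq a b : (forall k, odd (a %/ 2^k) = odd (b %/ 2^k)) -> a = b.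
Proof.
move: {2}(a+b) (leqnn (a+b)) => N; elim: N a b => [|N IH] a b hab H.
  by move: hab; rewrite leqn0 addn_eq0 => /andP[/eqP-> /eqP->].
rewrite -[a]odd_double_half -[b]odd_double_half.
have H0 := H 0; rewrite expn0 !divn1 in H0; rewrite H0.
congr (_ + _); congr (_.*2); apply: IH.
  rewrite -!divn2; lia.
by move=> k; have := H k.+1; rewrite expnS -!divn2 !divnMA.
Qed.

Lemma l1 a k : (a < k.+1) && (a < k) = (a < k).
Proof. by case: (ltnP a k) => h; rewrite ?andbT ?andbF // ltnS ltnW. Qed.
Lemma l2 a k : (a < k.+1) && ~~ (a < k) = (a == k).
Proof. by rewrite ltnS -leqNgt -eqn_leq. Qed.
Section Bits.
Lemma mid_sum (I : finType) (A : pred I) (g : I -> nat) k :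
  {in A &, injective g} ->
  \sum_(x | A x && (g x == k)) 2 ^ g x = [exists x, A x && (g x == k)] * 2 ^ k.
Proof.
move=> inj; case: existsP => [[y /andP[Ay /eqP gy]]|no].
  rewrite (bigD1 y) ?Ay ?gy ?eqxx //= big1 ?addn0 ?mul1n // => x /andP[/andP[Ax /eqP gx] xy].
  by case/eqP: xy; apply: inj => //; rewrite gx gy.
by rewrite big_pred0 // => x; apply/negP => h; apply: no; exists x.
Qed.

Lemma low_sum (I : finType) (A : pred I) (g : I -> nat) k :
  {in A &, injective g} ->
  \sum_(x | A x && (g x < k)) 2 ^ g x < 2 ^ k.
Proof.
move=> inj; elim: k => [|k IH].
  by rewrite big_pred0 // => x; rewrite ltn0 andbF.
rewrite (bigID (fun x => g x < k)) /=.
have -> : \sum_(x | A x && (g x < k.+1) && (g x < k)) 2^g x = \sum_(x | A x && (g x < k)) 2 ^ g x.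
  by apply: eq_bigl => x; case: (A x) => //=; apply: l1.
have -> : \sum_(x | A x && (g x < k.+1) && ~~ (g x < k)) 2^g x = \sum_(x | A x && (g x == k)) 2 ^ g x.
  by apply: eq_bigl => x; case: (A x) => //=; apply: l2.
rewrite mid_sum // expnS mul2n -addnn.
apply: leq_trans (leq_add IH (leqnn _)) _. rewrite leq_add2l.
by case: existsP; rewrite ?mul1n ?mul0n.
Qed.

Lemma bits_sum (I : finType) (A : pred I) (g : I -> nat) k :
  {in A &, injective g} ->
  odd ((\sum_(x | A x) 2 ^ g x) %/ 2 ^ k) = [exists x, A x && (g x == k)].
Proof.
move=> inj.
rewrite (bigID (fun x => g x < k)) (@bigID _ _ _ _ _ (fun x => g x == k) (fun i => A i && ~~ (g i < k))) /=.
have -> : \sum_(x | A x && ~~ (g x < k) && (g x == k)) 2^g x = \sum_(x | A x && (g x == k)) 2 ^ g x.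
  by apply: eq_bigl => x; case: (A x) => //=; case: ltngtP.
rewrite mid_sum //.
set H := \sum_(i | _ && (g i != k)) _.
have dH : 2 ^ k.+1 %| H.
  apply: dvdn_sum => x /andP[/andP[_ h1] h2]; apply: dvdn_exp2l.
  by move: h1 h2; case: ltngtP.
have := @low_sum _ _ _ k inj; set L := \sum_(i | _) _ => Lk.
rewrite -(divnK dH); set b := [exists x, _]; set q := H %/ _.
have -> : L + (b * 2 ^ k + q * 2 ^ k.+1) = (b + q * 2) * 2 ^ k + L.
  rewrite expnS; nia.
rewrite divnMDl ?expn_gt0 //.
rewrite (divn_small Lk) addn0 oddD oddM /= andbF addbF.
by case: b.
Qed.
End Bits.
Set Implicit Arguments. Unset Strict Implicit.

Arguments op_odd {p}.
Lemma op_gt0 p : 0 < p -> 0 < op p.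
Proof. by move=> p0; have := op_odd p0; case: (op p). Qed.

Arguments op_gt0 {p}.
Definition X n (S : {set 'I_n}) (i : 'I_n) : nat :=
  \sum_(j | (j \in S) && (op j.+1 == i.+1)) 2 ^ logn 2 j.+1.

Lemma sumX n (S : {set 'I_n}) : \sum_(i < n) i.+1 * X S i = \sum_(j in S) j.+1.
Proof.
rewrite /X.
rewrite (eq_bigr (fun i : 'I_n => \sum_(j in S) (if op j.+1 == i.+1 then i.+1 * 2 ^ logn 2 j.+1 else 0))); last first.
  by move=> i _; rewrite big_distrr big_mkcondr.
rewrite exchange_big /=; apply: eq_bigr => j jS.
have o0 := op_gt0 (ltn0Sn j).
have jlt : (op j.+1).-1 < n.
  have := op_le j.+1; have := ltn_ord j; lia.
rewrite (bigD1 (Ordinal jlt)) //= big1 ?addn0.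
  by rewrite prednK // eqxx op_spec.
move=> i ne; case: eqP => // e; case/eqP: ne; apply: val_inj => /=.
by rewrite e.
Qed.

Lemma inj_class n (P : pred 'I_n) o : (forall j, P j -> op j.+1 == o) ->
  {in P &, injective (fun j : 'I_n => logn 2 j.+1)}.
Proof.
move=> H x y Px Py /= e; apply: val_inj; apply: succn_inj.
by rewrite -(op_spec x.+1) -(op_spec y.+1) e (eqP (H _ Px)) (eqP (H _ Py)).
Qed.

Lemma X_le n (S : {set 'I_n}) i : X S i <= \sum_(j in S) j.+1.
Proof.
rewrite -sumX (bigD1 i) //=; apply: leq_trans (leq_addr _ _).
by rewrite leq_pmull.
Qed.

Definition glo n (S : {set 'I_n}) : {ffun 'I_n -> 'I_n.+1} := [ffun i => inord (X S i)].
Definition gli n (c : {ffun 'I_n -> 'I_n.+1}) : {set 'I_n} :=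
  [set j : 'I_n | [exists i : 'I_n, (i.+1 == op j.+1) && odd (c i %/ 2 ^ logn 2 j.+1)]].

Lemma glv n (S : {set 'I_n}) (hS : \sum_(j in S) j.+1 <= n) i : (glo S i : nat) = X S i.
Proof. by rewrite ffunE inordK // ltnS (leq_trans (X_le S i) hS). Qed.

Lemma gliglo n (S : {set 'I_n}) (hS : \sum_(j in S) j.+1 <= n) : gli (glo S) = S.
Proof.
apply/setP => j; rewrite inE.
have o0 := op_gt0 (ltn0Sn j).
have jlt : (op j.+1).-1 < n.
  have := op_le j.+1; have := ltn_ord j; lia.
apply/existsP/idP.
  case=> i /andP[/eqP hi]; rewrite glv // /X.
  rewrite (@bits_sum _ (fun j => (j \in S) && (op j.+1 == i.+1))
   (fun j : 'I_n => logn 2 j.+1) _); last first.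
    by apply: (inj_class (o := i.+1)) => x /andP[].
  case/existsP => x /andP[/andP[xS /eqP ex] /eqP lx].
  suff -> : j = x by [].
  apply: val_inj; apply: succn_inj.
  by rewrite -(op_spec x.+1) -(op_spec j.+1) lx ex hi.
move=> jS; exists (Ordinal jlt); rewrite /= prednK // eqxx /=.
rewrite glv // /X.
rewrite (@bits_sum _ (fun x => (x \in S) && (op x.+1 == (Ordinal jlt).+1))
   (fun j : 'I_n => logn 2 j.+1) _); last first.
  by apply: (inj_class (o := (Ordinal jlt).+1)) => x /andP[].
by apply/existsP; exists j; rewrite jS /= prednK // !eqxx.
Qed.

Lemma Xgli n (c : {ffun 'I_n -> 'I_n.+1}) (hodd : forall i : 'I_n, 0 < c i -> odd i.+1)
  (hle : forall i : 'I_n, i.+1 * c i <= n) i : X (gli c) i = c i.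
Proof.
apply: bits_eq => k; rewrite /X.
have eqA : forall j : 'I_n, (j \in gli c) && (op j.+1 == i.+1)
   = odd (c i %/ 2 ^ logn 2 j.+1) && (op j.+1 == i.+1).
  move=> j; rewrite inE; case: eqP => h; rewrite ?andbT ?andbF //.
  apply/existsP/idP => [[i' /andP[/eqP e o]]|o].
    have -> : i = i' by apply: val_inj; apply: succn_inj; rewrite e h.
    by [].
  by exists i; rewrite h eqxx.
rewrite (eq_bigl _ _ eqA).
rewrite (@bits_sum _ (fun j : 'I_n => odd (c i %/ 2 ^ logn 2 j.+1) && (op j.+1 == i.+1))
   (fun j : 'I_n => logn 2 j.+1) _); last first.
  by apply: (inj_class (o := i.+1)) => x /andP[].
apply/existsP/idP => [[x /andP[/andP[o _] /eqP e]]|o].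
  by rewrite -e.
have ci : 2 ^ k <= c i.
  by rewrite leqNgt; apply/negP => h; move: o; rewrite divn_small.
have oi : odd i.+1 by apply: hodd; apply: leq_trans ci; rewrite expn_gt0.
have p0 : 0 < i.+1 * 2 ^ k by rewrite muln_gt0 expn_gt0.
have lt : (i.+1 * 2 ^ k).-1 < n.
  have := hle i; have : i.+1 * 2 ^ k <= i.+1 * c i by rewrite leq_mul2l ci orbT.
  lia.
exists (Ordinal lt); rewrite /= prednK // op_oddM // logn_oddM // eqxx o.
by rewrite eqxx.
Qed.

Definition F n (x : {set 'I_n} * {ffun 'I_n -> 'I_n.+1}) : {ffun 'I_n * bool -> 'I_n.+1} :=
  [ffun p => if p.2 then x.2 p.1 else glo x.1 p.1].
Definition G n (m : {ffun 'I_n * bool -> 'I_n.+1}) : {set 'I_n} * {ffun 'I_n -> 'I_n.+1} :=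
  (gli [ffun i => m (i, false)], [ffun i => m (i, true)]).

Lemma sum_pair n (f : 'I_n * bool -> nat) :
  \sum_(p : 'I_n * bool) f p = \sum_(i < n) f (i, true) + \sum_(i < n) f (i, false).
Proof.
transitivity (\sum_(i < n) \sum_(b : bool) f (i, b)).
  by rewrite pair_big; apply: eq_big => // -[].
by rewrite -big_split; apply: eq_bigr => i _; rewrite big_bool.
Qed.

Lemma F_ok r n x : overptn_odd_gt r n x -> colptn_odd r n (F x).
Proof.
case: x => S mu /andP[/eqP hs /forallP hf] /=.
have hS : \sum_(j in S) j.+1 <= n by rewrite -[X in _ <= X]hs leq_addr.
apply/andP; split.
  apply/eqP; rewrite sum_pair addnC -[RHS]hs -sumX; congr (_ + _); apply: eq_bigr => i _;
  by rewrite ffunE /= ?(glv hS).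
apply/forallP => -[i b]; rewrite ffunE /=; case: b => /=; first exact: hf i.
rewrite andbT; apply/implyP; rewrite (glv hS) /X; case oi: (odd i.+1) => //.
rewrite big_pred0 // => j; apply/negbTE/negP => /andP[_ /eqP e].
by move: (op_odd (ltn0Sn j)); rewrite e oi.
Qed.

Lemma col_facts r n m : colptn_odd r n m ->
  let c := [ffun i => m (i, false)] in
  [/\ forall i : 'I_n, 0 < c i -> odd i.+1,
      forall i : 'I_n, i.+1 * c i <= n &
      \sum_(j in gli c) j.+1 = \sum_(i < n) i.+1 * c i].
Proof.
move=> /andP[/eqP hs /forallP hf] c.
have hodd (i : 'I_n) : 0 < c i -> odd i.+1.
  by rewrite ffunE => h; have := hf (i, false); rewrite h /= => /andP[].
have hle (i : 'I_n) : i.+1 * c i <= n.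
  rewrite -[X in _ <= X]hs sum_pair ffunE; apply: leq_trans (leq_addl _ _).
  by rewrite (bigD1 i) //= leq_addr.
split => //; rewrite -sumX; apply: eq_bigr => i _; by rewrite Xgli.
Qed.

Lemma G_ok r n m : colptn_odd r n m -> overptn_odd_gt r n (G m).
Proof.
move=> hm; have [hodd hle hsum] := col_facts hm.
move: hm => /andP[/eqP hs /forallP hf].
apply/andP; split.
  apply/eqP; rewrite /= hsum -[RHS]hs sum_pair addnC; congr (_ + _);
  by apply: eq_bigr => i _; rewrite ffunE.
by apply/forallP => i; rewrite /= ffunE; exact: hf (i, true).
Qed.

Lemma GF r n x : overptn_odd_gt r n x -> G (F x) = x.
Proof.
case: x => S mu /andP[/eqP hs _].
have hS : \sum_(j in S) j.+1 <= n by rewrite -[X in _ <= X]hs leq_addr.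
rewrite /G /=; congr pair.
  have -> : [ffun i => F (S, mu) (i, false)] = glo S.
    by apply/ffunP => i; rewrite !ffunE.
  exact: gliglo.
by apply/ffunP => i; rewrite !ffunE.
Qed.

Lemma FG r n m : colptn_odd r n m -> F (G m) = m.
Proof.
move=> hm; have [hodd hle hsum] := col_facts hm.
have hS : \sum_(j in gli [ffun i => m (i, false)]) j.+1 <= n.
  move: hm => /andP[/eqP hs _]; rewrite hsum -[X in _ <= X]hs sum_pair.
  apply: leq_trans (leq_addl _ _); apply: leq_sum => i _; by rewrite ffunE.
apply/ffunP => -[i b]; rewrite ffunE /=; case: b; rewrite ?ffunE //.
by rewrite Xgli // ffunE inord_val.
Qed.

Lemma card_le (T1 T2 : finType) (P1 : pred T1) (P2 : pred T2) (f : T1 -> T2) (g : T2 -> T1) :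
  (forall x, P1 x -> P2 (f x)) -> (forall x, P1 x -> g (f x) = x) ->
  #|[pred x | P1 x]| <= #|[pred y | P2 y]|.
Proof.
move=> fP gf.
rewrite -(card_in_imset (f := f) (D := [pred x | P1 x])); last first.
  by move=> x y Px Py e; rewrite -(gf x Px) -(gf y Py) e.
apply: subset_leq_card; apply/subsetP => y /imsetP [x Px ->].
by rewrite inE; apply: fP.
Qed.

Theorem proposition2p5 (r : nat) (hr2 : 2 <= r) (hr : ~~ odd r) (n : nat) :
  num_overptn_odd_gt r n = num_colptn_odd r n.
Proof.
apply/eqP; rewrite eqn_leq; apply/andP; split.
  apply: (@card_le _ _ _ _ (@F n) (@G n)); [exact: F_ok | exact: GF].
apply: (@card_le _ _ _ _ (@G n) (@F n)); [exact: G_ok | exact: FG].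
Qed.
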